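(* Consider Model 1 (the risk-averse insider model) with $N\ge 1$ trading periods, as described in the context. A subgame perfect linear equilibrium exists. In this equilibrium there are real numbers $\beta_n,\lambda_n,\alpha_n,\delta_n,\Sigma_n$ such that for $n=1,\dots,N$: $x_n=\beta_n(v-p_{n-1})$, $p_n-p_{n-1}=\lambda_n y_n$, $\Sigma_n=\operatorname{Var}(v\mid y_1,\dots,y_n)$, and $$E\Big(\sum_{k=n}^N\pi_k\,\Big|\,p_1,\dots,p_{n-1},v\Big)=\alpha_{n-1}(v-p_{n-1})^2+\delta_{n-1},$$ where $$\delta_n=a_n\sigma_u\Delta t_N^{1/2}\Sigma_n^{1/2},\quad \alpha_n=b_n\sigma_u\Delta t_N^{1/2}\Sigma_n^{-1/2}\quad(n=0,1,\dots,N-1),\qquad \beta_n=c_n\sigma_u\Delta t_N^{1/2}\Sigma_{n-1}^{-1/2}\quad(n=1,\dots,N),$$ and the sequences $\{a_n\},\{b_n\},\{c_n\}$, with terminal values $a_{N-1}=0$, $b_{N-1}=\tfrac12$, $c_N=1$, satisfy for $n=1,\dots,N-1$ the recursion $$a_{n-1}=a_n\Big(\frac{1}{c_n^2+1}\Big)^{1/2}+b_n\Big(\frac{1}{c_n^2+1}\Big)^{3/2}c_n^2,\qquad b_{n-1}=b_n\Big(\frac{1}{c_n^2+1}\Big)^{3/2}+\frac{c_n}{c_n^2+1},\qquad c_n=\Big(\frac{2b_n-a_n}{a_n+b_n}\Big)^{1/2},$$ with $c_n>0$ for $n=1,\dots,N$.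
   Context: Model. Fix an integer $N\ge1$ and put $\Delta t_N=1/N$. A risky asset has liquidation value $v\sim N(p_0,\Sigma_0)$ with $\Sigma_0=\sigma_v^2>0$. In each period $n=1,\dots,N$ noise traders submit $u_n\sim N(0,\sigma_u^2\Delta t_N)$ ($\sigma_u>0$), the $u_n$ i.i.d. and independent of $v$. The insider knows $v$ and submits an order $x_n=\beta_n(v-p_{n-1})$ with $\beta_n\in\mathbb R$ (this is the insider's strategy space). The market maker observes the total order $y_n=x_n+u_n$ and sets the price $p_n=E[v\mid y_1,\dots,y_n]$ (semi-strong market efficiency). The insider's profit in period $n$ is $\pi_n=x_n(v-p_n)$, and $\Sigma_n=\operatorname{Var}(v\mid y_1,\dots,y_n)$. For such strategies, with $\lambda_n=\beta_n\Sigma_{n-1}/(\beta_n^2\Sigma_{n-1}+\sigma_u^2\Delta t_N)$ one has $p_n-p_{n-1}=\lambda_ny_n$ and $\Sigma_n=\Sigma_{n-1}\sigma_u^2\Delta t_N/(\beta_n^2\Sigma_{n-1}+\sigma_u^2\Delta t_N)$, and $E(\sum_{k=n}^N\pi_k\mid p_1,\dots,p_{n-1},v)=\alpha_{n-1}(v-p_{n-1})^2+\delta_{n-1}$ with $\alpha_N=\delta_N=0$, $\alpha_{n-1}=\alpha_n(1-\lambda_n\beta_n)^2+\beta_n(1-\lambda_n\beta_n)$, $\delta_{n-1}=\delta_n+\alpha_n\lambda_n^2\sigma_u^2\Delta t_N$. Here $\alpha_{n-1}(v-p_{n-1})^2$ is the ''risky profit'' and $\delta_{n-1}$ the ''guaranteed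 profit''. Equilibrium. An insider strategy specifies, for each period $n$ and each value $\Sigma_{n-1}>0$ of the current conditional variance, an intensity $\beta_n$. Given the strategy for periods $n+1,\dots,N$, each choice of $\beta_n$ determines (through the formulas above, with later intensities given by the strategy applied to the resulting conditional variances) $\alpha_{n-1}$ and $\delta_{n-1}$ as functions of $\beta_n$ and $\Sigma_{n-1}$. A subgame perfect (linear) equilibrium of Model 1 is a strategy such that for every $n$ and every $\Sigma_{n-1}>0$ the prescribed $\beta_n$ first maximizes the guaranteed profit $\delta_{n-1}$ over $\beta_n\in\mathbb R$, and, among the maximizers of $\delta_{n-1}$, maximizes the risky profit $\alpha_{n-1}(v-p_{n-1})^2$ (i.e. maximizes $\alpha_{n-1}$), with the market maker pricing efficiently given this strategy. *)

(* Defs.v *)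
From Stdlib Require Import Reals Lra Lia.
Open Scope R_scope.

(* Model 1, encoded through the recursive formulas given in the context.
   Parameters: N (number of periods), su = sigma_u, sv = sigma_v. *)

(* sigma_u^2 * Delta t_N *)
Definition s2 (N : nat) (su : R) : R := su ^ 2 / INR N.

(* lambda_n as a function of beta_n and Sigma_{n-1} *)
Definition lam (N : nat) (su b Sg : R) : R := b * Sg / (b ^ 2 * Sg + s2 N su).

(* Sigma_n as a function of beta_n and Sigma_{n-1} *)
Definition Snext (N : nat) (su b Sg : R) : R :=
  Sg * s2 N su / (b ^ 2 * Sg + s2 N su).

(* An insider strategy: for each period n and current variance Sigma_{n-1},
   an intensity beta_n. *)
Definition strategy := nat -> R -> R.

(* One backward step: from (alpha_n, delta_n) and the choice beta_n = b at
   variance Sigma_{n-1} = Sg, compute (alpha_{n-1}, delta_{n-1}). *)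
Definition step (N : nat) (su b Sg : R) (ad : R * R) : R * R :=
  let '(a', d') := ad in
  let l := lam N su b Sg in
  (a' * (1 - l * b) ^ 2 + b * (1 - l * b), d' + a' * l ^ 2 * s2 N su).

(* cont N su st n m Sg: (alpha_{n-1}, delta_{n-1}) when periods n, ..., n+m-1
   are played according to st starting from Sigma_{n-1} = Sg
   (with alpha = delta = 0 after the last period). *)
Fixpoint cont (N : nat) (su : R) (st : strategy) (n m : nat) (Sg : R) : R * R :=
  match m with
  | O => (0, 0)
  | S m' => let b := st n Sg in
            step N su b Sg (cont N su st (S n) m' (Snext N su b Sg))
  end.

Definition dev (N : nat) (su : R) (st : strategy) (n : nat) (b Sg : R) : R * R :=
  step N su b Sg (cont N su st (S n) (N - n) (Snext N su b Sg)).

Definition is_SPE (N : nat) (su : R) (st : strategy) : Prop :=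
  forall n : nat, (1 <= n <= N)%nat ->
  forall Sg : R, 0 < Sg ->
  forall b : R,
    let best := dev N su st n (st n Sg) Sg in
    let alt := dev N su st n b Sg in
    snd alt <= snd best /\ (snd alt = snd best -> fst alt <= fst best).

Fixpoint Sig (N : nat) (su sv : R) (st : strategy) (n : nat) : R :=
  match n with
  | O => sv ^ 2
  | S k => Snext N su (st (S k) (Sig N su sv st k)) (Sig N su sv st k)
  end.

Definition beta (N : nat) (su sv : R) (st : strategy) (n : nat) : R :=
  st n (Sig N su sv st (n - 1)).

Definition lambda (N : nat) (su sv : R) (st : strategy) (n : nat) : R :=
  lam N su (beta N su sv st n) (Sig N su sv st (n - 1)).

Definition alpha (N : nat) (su sv : R) (st : strategy) (n : nat) : R :=
  fst (cont N su st (S n) (N - n) (Sig N su sv st n)).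
Definition delta (N : nat) (su sv : R) (st : strategy) (n : nat) : R :=
  snd (cont N su st (S n) (N - n) (Sig N su sv st n)).

(* Main.v *)
Require Import Defs.
From Stdlib Require Import Reals Lra Lia.
Open Scope R_scope.

Definition cf (A B : R) := sqrt ((2*B - A)/(A+B)).
Definition Fa (A B : R) := A * sqrt (1 / (cf A B ^ 2 + 1)) + B * sqrt (1/(cf A B ^2+1)) ^ 3 * cf A B ^ 2.
Definition Fb (A B : R) := B * sqrt (1/(cf A B^2+1))^3 + cf A B / (cf A B ^2 + 1).
Fixpoint PP (k : nat) : R * R := match k with O => (0, 1/2) | S k' => (Fa (fst (PP k')) (snd (PP k')), Fb (fst (PP k')) (snd (PP k'))) end.
Definition aa N n := if (n <? N)%nat then fst (PP (N-1-n)) else 0.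
Definition bb N n := if (n <? N)%nat then snd (PP (N-1-n)) else 0.
Definition cc N n := if (n <? N)%nat then cf (aa N n) (bb N n) else 1.
Definition stE N su : strategy := fun n Sg => cc N n * su * sqrt (1 / INR N) / sqrt Sg.

Lemma sq_sqrt x : 0 <= x -> sqrt x ^ 2 = x.
Proof. intros; rewrite <- Rsqr_pow2; apply Rsqr_sqrt; lra. Qed.

Lemma F_inv A B : 0 <= A -> 0 < B -> A < 2*B ->
  0 < cf A B /\ cf A B ^2 = (2*B-A)/(A+B) /\ 0 <= Fa A B /\ 0 < Fb A B /\ Fa A B < 2 * Fb A B.
Proof.
  intros HA HB HAB.
  assert (Hq: 0 < (2*B-A)/(A+B)) by (apply Rdiv_lt_0_compat; lra).
  assert (Hc: 0 < cf A B) by (unfold cf; apply sqrt_lt_R0; lra).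
  assert (Hc2: cf A B ^ 2 = (2*B-A)/(A+B)) by (unfold cf; apply sq_sqrt; lra).
  unfold Fa, Fb. set (c := cf A B) in *.
  assert (Hp : 0 < 1/(c^2+1)) by (apply Rdiv_lt_0_compat; nra).
  assert (Hy : 0 < sqrt (1/(c^2+1))) by (apply sqrt_lt_R0; lra).
  assert (Hy2 : sqrt (1/(c^2+1)) ^ 2 = 1/(c^2+1)) by (apply sq_sqrt; lra).
  set (y := sqrt (1/(c^2+1))) in *.
  assert (E1: y^2*(c^2+1) = 1) by (rewrite Hy2; field; nra).
  assert (E2: c^2*(A+B) = 2*B - A) by (rewrite Hc2; field; lra).
  assert (E3: 3*B*y^2 = A+B) by nra.
  assert (Hcy: c/(c^2+1) = c*y^2) by (rewrite Hy2; field; nra).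
  rewrite Hcy.
  assert (0 <= B*y^3*c^2) by (apply Rmult_le_pos; [|nra]; apply Rmult_le_pos; [lra| apply pow_le; lra]).
  assert (0 < B*y^3) by (apply Rmult_lt_0_compat; [lra| apply pow_lt; lra]).
  assert (0 < c*y^2) by (apply Rmult_lt_0_compat; [lra| apply pow_lt; lra]).
  assert (Hid: 2*(B*y^3 + c*y^2) - (A*y+B*y^3*c^2) = y*(3*B*y^2 - (A+B)) + B*y*(1 - y^2*(c^2+1)) + 2*c*y^2) by ring.
  rewrite E3, E1 in Hid.
  repeat split; try lra.
Qed.

Lemma PP_inv k : 0 <= fst (PP k) /\ 0 < snd (PP k) /\ fst (PP k) < 2 * snd (PP k).
Proof.
  induction k as [|k IH]; simpl; [lra|].
  destruct IH as (H1&H2&H3). destruct (F_inv _ _ H1 H2 H3) as (_&_&?&?&?). lra.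
Qed.
Lemma step_gen N su r Sg b A B y : 0 < r -> r^2 = s2 N su -> 0 < Sg ->
  y = r / sqrt (b^2*Sg + s2 N su) ->
  step N su b Sg (B * r / sqrt (Snext N su b Sg), A * r * sqrt (Snext N su b Sg))
  = (B*r*y^3/sqrt Sg + b*y^2, r*sqrt Sg*(A*y + B*(y - y^3))).
Proof.
  intros Hr Hs HSg Hy.
  set (s := s2 N su) in *.
  set (D := b^2*Sg + s) in *.
  assert (Hs0 : 0 < s) by (rewrite <- Hs; nra).
  assert (HD : 0 < D) by (unfold D; nra).
  assert (HdD : 0 < sqrt D) by (apply sqrt_lt_R0; lra).
  assert (Hq : 0 < sqrt Sg) by (apply sqrt_lt_R0; lra).
  assert (Hq2 := sq_sqrt Sg ltac:(lra)).
  assert (Hd2 := sq_sqrt D ltac:(lra)).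
  assert (Hy0 : 0 < y) by (rewrite Hy; apply Rdiv_lt_0_compat; lra).
  assert (Hy2 : y^2 = s/D) by (rewrite Hy; replace ((r / sqrt D)^2) with (r^2/(sqrt D)^2) by (field; lra); rewrite Hd2, Hs; reflexivity).
  assert (HSn : sqrt (Snext N su b Sg) = sqrt Sg * y).
  { apply sqrt_lem_1. unfold Snext; fold s; fold D. apply Rlt_le, Rdiv_lt_0_compat; nra. apply Rmult_le_pos; lra.
    unfold Snext; fold s; fold D. replace (sqrt Sg * y * (sqrt Sg * y)) with (sqrt Sg ^2 * y^2) by ring.
    rewrite Hq2, Hy2. field; lra. }
  rewrite HSn. unfold step, lam. fold s. fold D.
  assert (HDe : D = b^2*Sg + s) by reflexivity. clearbody D.
  assert (e1 : 1 - b * Sg / D * b = y^2).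
  { rewrite Hy2. replace s with (D - b^2*Sg) by (rewrite HDe; ring). field. lra. }
  assert (e2 : (b * Sg / D)^2 * s = Sg * (y^2 - y^4)).
  { replace (y^4) with ((y^2)^2) by ring. rewrite Hy2.
    replace (Sg * (s / D - (s / D) ^ 2)) with (Sg*s*(D-s)/D^2) by (field; lra).
    replace (D - s) with (b^2*Sg) by (rewrite HDe; ring). field; lra. }
  rewrite e1. f_equal.
  - field; lra.
  - replace (B * r / (sqrt Sg * y) * (b * Sg / D) ^ 2 * s) with (B * r / (sqrt Sg * y) * ((b * Sg / D) ^ 2 * s)) by ring. rewrite e2. set (q := sqrt Sg) in *. rewrite <- Hq2. field. lra.
Qed.

Lemma ygen_sq N su r Sg b y : 0 < r -> r^2 = s2 N su -> 0 < Sg ->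
  y = r / sqrt (b^2*Sg + s2 N su) -> 0 < y /\ y^2 * (b^2*Sg + s2 N su) = r^2.
Proof.
  intros Hr Hs HSg Hy. assert (HD : 0 < b^2*Sg + s2 N su) by nra.
  assert (Hd := sq_sqrt _ (Rlt_le _ _ HD)). assert (0 < sqrt (b^2*Sg + s2 N su)) by (apply sqrt_lt_R0; lra).
  split. rewrite Hy; apply Rdiv_lt_0_compat; lra.
  rewrite Hy. rewrite <- Hd at 2. field. lra.
Qed.

Lemma step_eq N su r Sg b c A B : 0 < r -> r^2 = s2 N su -> 0 < Sg ->
  b = c * r / sqrt Sg ->
  step N su b Sg (B * r / sqrt (Snext N su b Sg), A * r * sqrt (Snext N su b Sg))
  = ((B * sqrt (1/(c^2+1))^3 + c/(c^2+1)) * r / sqrt Sg,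
     (A * sqrt (1/(c^2+1)) + B * sqrt (1/(c^2+1))^3 * c^2) * r * sqrt Sg).
Proof.
  intros Hr Hs HSg Hb.
  assert (Hq : 0 < sqrt Sg) by (apply sqrt_lt_R0; lra).
  assert (Hq2 := sq_sqrt Sg ltac:(lra)).
  rewrite (step_gen N su r Sg b A B (r / sqrt (b^2*Sg + s2 N su))) by auto.
  destruct (ygen_sq N su r Sg b (r / sqrt (b^2*Sg + s2 N su)) Hr Hs HSg eq_refl) as [Hy0 Hy2].
  set (y := r / sqrt (b^2*Sg + s2 N su)) in *.
  set (q := sqrt Sg) in *.
  assert (Hbs : b^2 * Sg = c^2 * r^2) by (rewrite Hb, <- Hq2; field; lra).
  rewrite Hbs, <- Hs in Hy2.
  assert (Hyc : y^2 * (c^2+1) = 1).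
  { assert (r^2 * (y^2*(c^2+1) - 1) = 0) by (replace 0 with (y^2*(c^2*r^2+r^2) - r^2) by lra; ring).
    apply Rmult_integral in H. destruct H; nra. }
  assert (HY : sqrt (1/(c^2+1)) = y).
  { apply sqrt_lem_1. apply Rlt_le, Rdiv_lt_0_compat; nra. lra.
    replace (1/(c^2+1)) with (y^2*(c^2+1)/(c^2+1)) by (rewrite Hyc; reflexivity). field. nra. }
  assert (Hy1 : y^2 = 1/(c^2+1)) by (rewrite <- HY; apply sq_sqrt; apply Rlt_le, Rdiv_lt_0_compat; nra).
  rewrite HY.
  assert (Hcy : c / (c^2+1) = c * y^2) by (rewrite Hy1; field; nra).
  rewrite Hcy, Hb. f_equal.
  - field. lra.
  - assert (y - y^3 = y^3 * c^2) by (replace (y^3) with (y*y^2) by ring; rewrite Hy1; field; nra). rewrite H. ring.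
Qed.

Lemma rec_lem N n : (S n <= N)%nat ->
  aa N n = aa N (S n) * sqrt (1/(cc N (S n)^2+1)) + bb N (S n) * sqrt (1/(cc N (S n)^2+1))^3 * cc N (S n)^2 /\
  bb N n = bb N (S n) * sqrt (1/(cc N (S n)^2+1))^3 + cc N (S n) / (cc N (S n)^2+1).
Proof.
  intros H. unfold cc, aa, bb.
  destruct (Nat.ltb_spec (S n) N); destruct (Nat.ltb_spec n N); try lia.
  - replace (N - 1 - n)%nat with (S (N - 1 - S n)) by lia. simpl. split; reflexivity.
  - replace (N - 1 - n)%nat with 0%nat by lia. simpl. split; [ring| field].
Qed.

Lemma bnd_lem N n : (n < N)%nat ->
  0 <= aa N n /\ 0 < bb N n /\ aa N n < 2 * bb N n /\ cc N n = cf (aa N n) (bb N n).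
Proof.
  intros H. unfold cc, aa, bb. destruct (Nat.ltb_spec n N); try lia.
  destruct (PP_inv (N-1-n)) as (?&?&?). repeat split; auto.
Qed.

Lemma Snext_pos N su b Sg : 0 < s2 N su -> 0 < Sg -> 0 < Snext N su b Sg.
Proof. intros. unfold Snext. apply Rdiv_lt_0_compat; nra. Qed.

Lemma r_facts N su : (1 <= N)%nat -> 0 < su ->
  0 < su * sqrt (1 / INR N) /\ (su * sqrt (1 / INR N))^2 = s2 N su.
Proof.
  intros HN Hsu. assert (HI : 0 < INR N) by (apply lt_0_INR; lia).
  assert (0 < 1/INR N) by (apply Rdiv_lt_0_compat; lra).
  split. apply Rmult_lt_0_compat; [lra| apply sqrt_lt_R0; lra].
  rewrite Rpow_mult_distr, sq_sqrt by lra. unfold s2. field. lra.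
Qed.

Lemma cont_lem N su : (1 <= N)%nat -> 0 < su -> forall k, (k <= N)%nat -> forall Sg, 0 < Sg ->
  cont N su (stE N su) (S (N - k)) k Sg =
  (bb N (N - k) * (su * sqrt (1 / INR N)) / sqrt Sg, aa N (N - k) * (su * sqrt (1 / INR N)) * sqrt Sg).
Proof.
  intros HN Hsu. destruct (r_facts N su HN Hsu) as [Hr Hs].
  set (r := su * sqrt (1 / INR N)) in *.
  assert (Hs0 : 0 < s2 N su) by (rewrite <- Hs; nra).
  induction k as [|k IH]; intros Hk Sg HSg.
  - simpl. unfold aa, bb. replace (N - 0)%nat with N by lia.
    destruct (Nat.ltb_spec N N); try lia. f_equal; field; apply Rgt_not_eq, sqrt_lt_R0; lra.
  - replace (S (N - S k)) with (N - k)%nat by lia. cbn [cont].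
    replace (S (N - k)) with (S (N - k)) by reflexivity.
    rewrite IH by (try lia; apply Snext_pos; auto).
    rewrite (step_eq N su r Sg _ (cc N (N - k)) _ _ Hr Hs HSg) by (unfold stE, r, Rdiv; ring).
    destruct (rec_lem N (N - S k) ltac:(lia)) as [E1 E2].
    replace (S (N - S k)) with (N - k)%nat in E1, E2 by lia.
    rewrite E1, E2. reflexivity.
Qed.

Lemma cmp_last r q b y ys : 0 < r -> 0 < q ->
  y^2*(b^2*q^2 + r^2) = r^2 -> ys^2*((1*r/q)^2*q^2 + r^2) = r^2 ->
  b*y^2 <= 1*r/q*ys^2.
Proof.
  intros Hr Hq Hy Hys.
  assert (HE : 0 < b^2*q^2 + r^2) by nra.
  assert (Hy' : y^2 = r^2/(b^2*q^2+r^2)) by (apply (Rmult_eq_reg_r (b^2*q^2+r^2)); [rewrite Hy; field; lra| lra]).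
  assert (Hys' : ys^2 = 1/2).
  { replace ((1*r/q)^2*q^2 + r^2) with (2*r^2) in Hys by (field; lra).
    apply (Rmult_eq_reg_r (2*r^2)); [|nra]. rewrite Hys. field. }
  rewrite Hy', Hys'.
  assert (1*r/q*(1/2) - b*(r^2/(b^2*q^2+r^2)) = r*(b*q-r)^2/(2*q*(b^2*q^2+r^2))) by (field; lra).
  assert (0 <= r*(b*q-r)^2/(2*q*(b^2*q^2+r^2))).
  { apply Rmult_le_pos. apply Rmult_le_pos; [lra| apply pow2_ge_0]. apply Rlt_le, Rinv_0_lt_compat. nra. }
  lra.
Qed.

Lemma cmp_main r q A B c b y ys : 0 < r -> 0 < q -> 0 <= A -> 0 < B -> A < 2*B -> 0 < c ->
  c^2 = (2*B-A)/(A+B) -> 0 < y -> 0 < ys ->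
  y^2*(b^2*q^2 + r^2) = r^2 -> ys^2*((c*r/q)^2*q^2 + r^2) = r^2 ->
  r*q*(A*y+B*(y-y^3)) <= r*q*(A*ys + B*(ys-ys^3)) /\
  (r*q*(A*y+B*(y-y^3)) = r*q*(A*ys + B*(ys-ys^3)) ->
     B*r*y^3/q + b*y^2 <= B*r*ys^3/q + c*r/q*ys^2).
Proof.
  intros Hr Hq HA HB HAB Hc Hc2 Hy Hys Ey Eys.
  replace ((c*r/q)^2*q^2 + r^2) with (r^2*(c^2+1)) in Eys by (field; lra).
  assert (E1 : ys^2*(c^2+1) = 1).
  { apply (Rmult_eq_reg_r (r^2)); [|nra]. rewrite <- Eys at 2. ring. }
  assert (E2 : c^2*(A+B) = 2*B - A) by (rewrite Hc2; field; lra).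
  assert (E3 : A = 3*B*ys^2 - B) by nra.
  assert (Hid : r*q*(A*ys + B*(ys-ys^3)) - r*q*(A*y+B*(y-y^3)) = r*q*B*(y-ys)^2*(y+2*ys)) by (rewrite E3; ring).
  assert (0 < r*q*B) by (apply Rmult_lt_0_compat; nra).
  assert (0 <= r*q*B*(y-ys)^2*(y+2*ys)) by (apply Rmult_le_pos; [apply Rmult_le_pos; [lra|apply pow2_ge_0]|lra]).
  split. lra.
  intros Heq.
  assert (r*q*B*(y-ys)^2*(y+2*ys) = 0) by lra.
  assert (Hyy : y = ys).
  { apply Rmult_integral in H1. destruct H1 as [H1|H1]; [|lra].
    apply Rmult_integral in H1. destruct H1 as [H1|H1]; [lra|]. nra. }
  subst ys.
  assert (H5 : y^2*(b^2*q^2 - c^2*r^2) = 0) by (replace (y^2*(b^2*q^2-c^2*r^2)) with (y^2*(b^2*q^2+r^2) - y^2*(r^2*(c^2+1))) by ring; lra).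
  apply Rmult_integral in H5. destruct H5 as [H5|H5]; [nra|].
  assert (b^2*q^2 = c^2*r^2) by lra.
  assert (b*q <= c*r).
  { destruct (Rle_or_lt (b*q) (c*r)) as [|Hlt]; [auto|]. assert (0<c*r) by nra.
    assert ((b*q)*(b*q) > (c*r)*(c*r)) by nra. nra. }
  assert (b <= c*r/q) by (apply (Rmult_le_reg_r q); [lra|]; field_simplify; lra).
  assert (0 < y^2) by nra. nra.
Qed.

Lemma dev_lem N su n b Sg : (1 <= N)%nat -> 0 < su -> (1 <= n <= N)%nat -> 0 < Sg ->
  dev N su (stE N su) n b Sg =
  (bb N n * (su * sqrt (1 / INR N)) * (su * sqrt (1 / INR N) / sqrt (b^2*Sg + s2 N su))^3 / sqrt Sg
     + b * (su * sqrt (1 / INR N) / sqrt (b^2*Sg + s2 N su))^2,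
   su * sqrt (1 / INR N) * sqrt Sg * (aa N n * (su * sqrt (1 / INR N) / sqrt (b^2*Sg + s2 N su))
     + bb N n * ((su * sqrt (1 / INR N) / sqrt (b^2*Sg + s2 N su))
                 - (su * sqrt (1 / INR N) / sqrt (b^2*Sg + s2 N su))^3))).
Proof.
  intros HN Hsu Hn HSg. destruct (r_facts N su HN Hsu) as [Hr Hs].
  assert (Hs0 : 0 < s2 N su) by (rewrite <- Hs; nra).
  unfold dev.
  assert (E := cont_lem N su HN Hsu (N - n) ltac:(lia) (Snext N su b Sg) (Snext_pos N su b Sg Hs0 HSg)).
  replace (N - (N - n))%nat with n in E by lia. rewrite E.
  apply step_gen; auto.
Qed.

Lemma Sig_pos N su sv st n : 0 < s2 N su -> 0 < sv -> 0 < Sig N su sv st n.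
Proof. intros. induction n; simpl. nra. apply Snext_pos; auto. Qed.

Theorem theorem1 (N : nat) (su sv : R) :
  (1 <= N)%nat -> 0 < su -> 0 < sv ->
  exists st : strategy,
    is_SPE N su st /\
    exists a b c : nat -> R,
      a (N - 1)%nat = 0 /\ b (N - 1)%nat = 1 / 2 /\ c N = 1 /\
      (forall n : nat, (1 <= n <= N - 1)%nat ->
         a (n - 1)%nat = a n * sqrt (1 / (c n ^ 2 + 1))
                         + b n * sqrt (1 / (c n ^ 2 + 1)) ^ 3 * c n ^ 2 /\
         b (n - 1)%nat = b n * sqrt (1 / (c n ^ 2 + 1)) ^ 3
                         + c n / (c n ^ 2 + 1) /\
         c n = sqrt ((2 * b n - a n) / (a n + b n))) /\
      (forall n : nat, (1 <= n <= N)%nat -> 0 < c n) /\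
      (forall n : nat, (n <= N - 1)%nat ->
         delta N su sv st n
           = a n * su * sqrt (1 / INR N) * sqrt (Sig N su sv st n) /\
         alpha N su sv st n
           = b n * su * sqrt (1 / INR N) / sqrt (Sig N su sv st n)) /\
      (forall n : nat, (1 <= n <= N)%nat ->
         beta N su sv st n
           = c n * su * sqrt (1 / INR N) / sqrt (Sig N su sv st (n - 1))).
Proof.
  intros HN Hsu Hsv.
  destruct (r_facts N su HN Hsu) as [Hr Hs].
  assert (Hs0 : 0 < s2 N su) by (rewrite <- Hs; nra).
  exists (stE N su). split.
  - intros n Hn Sg HSg b0. cbv zeta.
    rewrite !(dev_lem N su n) by auto.
    set (r := su * sqrt (1 / INR N)) in *.
    assert (Hst : stE N su n Sg = cc N n * r / sqrt Sg) by (unfold stE, r, Rdiv; ring).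
    rewrite Hst.
    assert (Hq : 0 < sqrt Sg) by (apply sqrt_lt_R0; lra).
    assert (Hq2 := sq_sqrt Sg ltac:(lra)).
    destruct (ygen_sq N su r Sg b0 _ Hr Hs HSg eq_refl) as [Hy0 Hy2].
    destruct (ygen_sq N su r Sg (cc N n * r / sqrt Sg) _ Hr Hs HSg eq_refl) as [Hys0 Hys2].
    set (y := r / sqrt (b0^2*Sg + s2 N su)) in *.
    set (ys := r / sqrt ((cc N n * r / sqrt Sg)^2*Sg + s2 N su)) in *.
    set (q := sqrt Sg) in *.
    rewrite <- Hq2, <- Hs in Hy2, Hys2. simpl fst; simpl snd.
    destruct (Nat.eq_dec n N) as [->|Hne].
    + unfold aa, bb, cc. destruct (Nat.ltb_spec N N); try lia.
      unfold cc in Hys2. destruct (Nat.ltb_spec N N); try lia.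
      replace (r * q * (0 * y + 0 * (y - y ^ 3))) with 0 by ring.
      replace (r * q * (0 * ys + 0 * (ys - ys ^ 3))) with 0 by ring.
      split; [lra|]. intros _.
      replace (0 * r * y ^ 3 / q) with 0 by (field; lra).
      replace (0 * r * ys ^ 3 / q) with 0 by (field; lra).
      assert (Hcl := cmp_last r q b0 y ys Hr Hq Hy2 Hys2). lra.
    + destruct (bnd_lem N n ltac:(lia)) as (HA&HB&HAB&Hc).
      destruct (F_inv _ _ HA HB HAB) as (Hcp&Hc2&_).
      rewrite <- Hc in Hcp, Hc2.
      exact (cmp_main r q (aa N n) (bb N n) (cc N n) b0 y ys Hr Hq HA HB HAB Hcp Hc2 Hy0 Hys0 Hy2 Hys2).
  - exists (aa N), (bb N), (cc N).
    split; [|split; [|split; [|split; [|split; [|split]]]]].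
    + unfold aa. destruct (Nat.ltb_spec (N-1) N); try lia. replace (N-1-(N-1))%nat with 0%nat by lia. reflexivity.
    + unfold bb. destruct (Nat.ltb_spec (N-1) N); try lia. replace (N-1-(N-1))%nat with 0%nat by lia. reflexivity.
    + unfold cc. destruct (Nat.ltb_spec N N); try lia. reflexivity.
    + intros n Hn. destruct (rec_lem N (n-1) ltac:(lia)) as [E1 E2].
      replace (S (n-1)) with n in E1, E2 by lia.
      destruct (bnd_lem N n ltac:(lia)) as (_&_&_&Hc).
      split; [exact E1| split; [exact E2|]]. rewrite Hc. reflexivity.
    + intros n Hn. destruct (Nat.eq_dec n N) as [->|Hne].
      * unfold cc. destruct (Nat.ltb_spec N N); try lia. lra.
      * destruct (bnd_lem N n ltac:(lia)) as (HA&HB&HAB&Hc).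
        destruct (F_inv _ _ HA HB HAB) as (Hcp&_). rewrite Hc. exact Hcp.
    + intros n Hn. unfold delta, alpha.
      assert (E := cont_lem N su HN Hsu (N - n) ltac:(lia) (Sig N su sv (stE N su) n) (Sig_pos N su sv _ n Hs0 Hsv)).
      replace (N - (N - n))%nat with n in E by lia. rewrite E. simpl fst; simpl snd.
      split; unfold Rdiv; ring.
    + intros n Hn. unfold beta, stE. reflexivity.
Qed.
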